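(* Let $m\ge 2$ and let $\mathbf A$ be the $(2m-2)\times(2m-2)$ replacement matrix defined in the context. Define the vector $\mathbf v=(v_1,\dots,v_{2m-2})^T$ by $$v_i=\frac{i}{m(m+1)(H_m-1)}\quad (1\le i\le m),\qquad v_{m+j}=\frac{1}{m(m+1)(H_m-1)}\cdot\frac{m(m+1)}{j+2}\quad (1\le j\le m-2),$$ where $H_m=\sum_{r=1}^m 1/r$. Then $\mathbf A^T\mathbf v=\mathbf v$ and $\sum_{i=1}^{2m-2}v_i=1$. Moreover the eigenvalue $1$ is the eigenvalue of $\mathbf A^T$ of largest real part, its eigenspace is one-dimensional, and $\mathbf v$ is the unique eigenvector of $\mathbf A^T$ for eigenvalue $1$ whose components sum to $1$.
   Context: Fix an integer $m\ge 2$. Rows and columns of $\mathbf A$ are indexed by $1,\dots,2m-2$; entry $A_{r,c}$ is the net number of balls of color $c$ added when a ball of color $r$ is drawn. For $m=2$, $\mathbf A=\begin{pmatrix}-1&2\\1&0\end{pmatrix}$. For $m\ge 3$, all entries of $\mathbf A$ are $0$ except: row $1$: $A_{1,1}=-1$, $A_{1,m+1}=2$; row $i$ for $2\le i\le m$: $A_{i,i}=-i$, $A_{i,i-1}=i-1$, $A_{i,m+1}=2$; row $m+i-1$ for $2\le i\le m-2$: $A_{m+i-1,m+i-1}=-i$, $A_{m+i-1,m+i}=i+1$; row $2m-2$: $A_{2m-2,2m-2}=-(m-1)$, $A_{2m-2,m}=m$. (Every row sums to $1$.) $H_m=\sum_{r=1}^m 1/r$ denotes the $m$-th harmonic numbe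r. *)

(* Defs.v *)
(* scalars are algC (algebraic complex numbers), since the
   spectrum of A^T may be non-real. *)
From HB Require Import structures.
From mathcomp Require Import all_boot all_order all_algebra all_field.
Set Implicit Arguments. Unset Strict Implicit. Unset Printing Implicit Defensive.
Import Order.TTheory GRing.Theory Num.Theory.
Local Open Scope ring_scope.

(* Entry A_{r,c} of the replacement matrix, with 1-based indices r, c. *)
Definition urnA_entry (m r c : nat) : algC :=
  if m == 2%N then
    (if (r == 1%N) && (c == 1%N) then -1
     else if (r == 1%N) && (c == 2%N) then 2
     else if (r == 2%N) && (c == 1%N) then 1
     else 0)
  else if r == 1%N then
    (if c == 1%N then -1 else if c == m.+1 then 2 else 0)
  else if (2 <= r <= m)%N then
    (if c == r then - (r%:R) else if c == r.-1 then (r.-1)%:R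
     else if c == m.+1 then 2 else 0)
  else if r == (2 * m - 2)%N then
    (if c == r then - ((m - 1)%N%:R) else if c == m then m%:R else 0)
  else if (m.+1 <= r <= 2 * m - 3)%N then
    (* r = m + i - 1 with 2 <= i <= m-2, i.e. i = r - m + 1 *)
    (if c == r then - ((r - m + 1)%N%:R)
     else if c == r.+1 then ((r - m + 2)%N%:R) else 0)
  else 0.

Definition urnA (m : nat) : 'M[algC]_(2 * m - 2) :=
  \matrix_(i, j) urnA_entry m i.+1 j.+1.

Definition harm (m : nat) : algC := \sum_(1 <= r < m.+1) (r%:R)^-1.

Definition urnv_entry (m k : nat) : algC :=
  let c := ((m * (m + 1))%N%:R * (harm m - 1))^-1 in
  if (k <= m)%N then c * k%:R
  else c * ((m * (m + 1))%N%:R / ((k - m + 2)%N%:R)).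

Definition urnv (m : nat) : 'cV[algC]_(2 * m - 2) :=
  \col_i urnv_entry m i.+1.

(* Main.v *)
Require Import Defs.
From HB Require Import structures.
From mathcomp Require Import all_boot all_order all_algebra all_field.
From mathcomp Require Import zify ring.
Import Order.TTheory GRing.Theory Num.Theory.
Local Open Scope ring_scope.

Lemma sparse (a b : nat) (G : nat -> algC) (S : seq nat) : uniq S ->
  (forall k, k \in S -> (a <= k < b)%N) ->
  (forall k, (a <= k < b)%N -> k \notin S -> G k = 0) ->
  \sum_(a <= k < b) G k = \sum_(k <- S) G k.
Proof.
move=> uS HS HG.
rewrite (bigID (mem S)) /= [X in _ + X]big1_seq ?addr0; last first.
  by move=> k /andP [kS]; rewrite mem_index_iota => /HG; apply.
rewrite -big_filter; apply: perm_big; apply: uniq_perm.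
- exact: filter_uniq (iota_uniq _ _).
- exact: uS.
move=> k; rewrite mem_filter mem_index_iota; case kS : (k \in S) => //=.
exact: HS.
Qed.

Lemma sparse2 a b (G : nat -> algC) c1 c2 : c1 != c2 ->
  (a <= c1 < b)%N -> (a <= c2 < b)%N ->
  (forall c, (a <= c < b)%N -> c != c1 -> c != c2 -> G c = 0) ->
  \sum_(a <= c < b) G c = G c1 + G c2.
Proof.
move=> ne h1 h2 HG; rewrite (@sparse a b G [:: c1; c2]).
- by rewrite !big_cons big_nil addr0.
- by rewrite /= inE ne.
- by move=> k; rewrite !inE => /orP [] /eqP ->.
- by move=> k hk; rewrite !inE negb_or => /andP [] *; apply: HG.
Qed.

Lemma sparse3 a b (G : nat -> algC) c1 c2 c3 : c1 != c2 -> c1 != c3 -> c2 != c3 ->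
  (a <= c1 < b)%N -> (a <= c2 < b)%N -> (a <= c3 < b)%N ->
  (forall c, (a <= c < b)%N -> c != c1 -> c != c2 -> c != c3 -> G c = 0) ->
  \sum_(a <= c < b) G c = G c1 + G c2 + G c3.
Proof.
move=> n12 n13 n23 h1 h2 h3 HG; rewrite (@sparse a b G [:: c1; c2; c3]).
- by rewrite !big_cons big_nil addr0 addrA.
- by rewrite /= !inE negb_or n12 n13 n23.
- by move=> k; rewrite !inE => /orP [/eqP ->|/orP [] /eqP ->].
- by move=> k hk; rewrite !inE !negb_or => /andP [? /andP [? ?]]; apply: HG.
Qed.

Ltac ents := rewrite /urnA_entry; repeat (case: ifPn => ?); try (exfalso; lia); try done; try (by congr (- _); congr (_%:R); lia); try (by congr (_%:R); lia).

Lemma sumnat k : \sum_(1 <= r < k.+1) (r%:R : algC) = (k * k.+1)%N%:R / 2.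
Proof.
elim: k => [|k IH]; first by rewrite big_geq // mul0n mul0r.
rewrite big_nat_recr //= IH.
have two0 : (2 : algC) != 0 by rewrite pnatr_eq0.
by field.
Qed.

Ltac side := repeat (apply/andP; split); try done;
  rewrite -?natrD ?natr1 ?nat1r ?pnatr_eq0 //; try (apply/eqP; lia).

Section M3.
Variable m : nat.
Hypothesis hm : (3 <= m)%N.
Local Notation E := (urnA_entry m).
Local Notation n := (2 * m - 2)%N.

Lemma zE r c : E r c = 0 -> forall y, E r c * y = 0.
Proof. by move=> -> y; rewrite mul0r. Qed.

Lemma R1 (Y : nat -> algC) : \sum_(1 <= c < n.+1) E 1 c * Y c = (-1) * Y 1%N + 2 * Y m.+1.
Proof.
rewrite (sparse2 _ _ _ 1 m.+1); try (apply/eqP; lia); try lia.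
  congr (_ * _ + _ * _); ents.
move=> c hc h1 h2; apply: zE; ents.
Qed.

Lemma R2 (Y : nat -> algC) s : (s.+2 <= m)%N ->
  \sum_(1 <= c < n.+1) E s.+2 c * Y c =
  (- s.+2%:R) * Y s.+2 + s.+1%:R * Y s.+1 + 2 * Y m.+1.
Proof.
move=> hs.
rewrite (sparse3 _ _ _ s.+2 s.+1 m.+1); try (apply/eqP; lia); try lia.
  congr (_ * _ + _ * _ + _ * _); ents.
move=> c hc h1 h2 h3; apply: zE; ents.
Qed.

Lemma R3 (Y : nat -> algC) :
  \sum_(1 <= c < n.+1) E n c * Y c = (- (m - 1)%N%:R) * Y n + m%:R * Y m.
Proof.
rewrite (sparse2 _ _ _ n m); try (apply/eqP; lia); try lia.
  congr (_ * _ + _ * _); ents.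
move=> c hc h1 h2; apply: zE; ents.
Qed.

Lemma R4 (Y : nat -> algC) j : (2 <= j <= m - 2)%N ->
  \sum_(1 <= c < n.+1) E (m + j - 1)%N c * Y c =
  (- j%:R) * Y (m + j - 1)%N + j.+1%:R * Y (m + j)%N.
Proof.
move=> hj.
rewrite (sparse2 _ _ _ (m + j - 1)%N (m + j)%N); try (apply/eqP; lia); try lia.
  congr (_ * _ + _ * _); ents.
move=> c hc h1 h2; apply: zE; ents.
Qed.

Lemma C1 (V : nat -> algC) : \sum_(1 <= r < n.+1) E r 1 * V r = (-1) * V 1%N + 1 * V 2%N.
Proof.
rewrite (sparse2 _ _ _ 1 2); try (apply/eqP; lia); try lia.
  congr (_ * _ + _ * _); ents.
move=> c hc h1 h2; apply: zE; ents.
Qed.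

Lemma C2 (V : nat -> algC) s : (s.+3 <= m)%N ->
  \sum_(1 <= r < n.+1) E r s.+2 * V r = (- s.+2%:R) * V s.+2 + s.+2%:R * V s.+3.
Proof.
move=> hs; rewrite (sparse2 _ _ _ s.+2 s.+3); try (apply/eqP; lia); try lia.
  congr (_ * _ + _ * _); ents.
move=> c hc h1 h2; apply: zE; ents.
Qed.

Lemma C3 (V : nat -> algC) :
  \sum_(1 <= r < n.+1) E r m * V r = (- m%:R) * V m + m%:R * V n.
Proof.
rewrite (sparse2 _ _ _ m n); try (apply/eqP; lia); try lia.
  congr (_ * _ + _ * _); ents.
move=> c hc h1 h2; apply: zE; ents.
Qed.

Lemma C5 (V : nat -> algC) j : (2 <= j <= m - 2)%N ->
  \sum_(1 <= r < n.+1) E r (m + j)%N * V r =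
  j.+1%:R * V (m + j - 1)%N + (- j.+1%:R) * V (m + j)%N.
Proof.
move=> hj; rewrite (sparse2 _ _ _ (m + j - 1)%N (m + j)%N); try (apply/eqP; lia); try lia.
  congr (_ * _ + _ * _); ents.
move=> c hc h1 h2; apply: zE; ents.
Qed.

Lemma C4 (V : nat -> algC) :
  \sum_(1 <= r < n.+1) E r m.+1 * V r =
  \sum_(1 <= r < m.+1) 2 * V r + (-2) * V m.+1.
Proof.
rewrite (big_cat_nat (n := m.+1)) ?(@big_ltn _ _ _ m.+1) /=; try lia.
rewrite [X in _ + (_ + X)]big1_seq ?addr0; last first.
  move=> r /andP [_]; rewrite mem_index_iota => hr; apply: zE; ents.
congr (_ + _ * _); last by ents.
rewrite big_nat_cond [RHS]big_nat_cond; apply: eq_bigr => r /andP [hr _].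
congr (_ * _); ents.
Qed.

Lemma Hrow3 r : (1 <= r <= n)%N -> \sum_(1 <= c < n.+1) E r c * 1 = 1.
Proof.
move=> hr.
have [->|r1] := eqVneq r 1%N; first by rewrite R1; ring.
have [hrm|hrm] := leqP r m.
  have -> : r = (r - 2).+2 by lia.
  by rewrite R2; [ring| lia].
have [->|rn] := eqVneq r n; first by rewrite R3 natrB; [ring| lia].
have -> : r = (m + (r - m + 1) - 1)%N by lia.
by rewrite R4; [ring | lia].
Qed.

Lemma Hharm3 (Y : nat -> algC) :
  (forall r, (1 <= r <= n)%N -> \sum_(1 <= c < n.+1) E r c * Y c = Y r) ->
  forall c, (1 <= c <= n)%N -> Y c = Y 1%N.
Proof.
move=> HY.
have two0 : (2 : algC) != 0 by rewrite pnatr_eq0.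
have Hm1 : Y m.+1 = Y 1%N.
  have := HY 1%N; rewrite R1 => /(_ ltac:(lia)) E1.
  apply/eqP; rewrite -subr_eq0; apply/eqP; apply: (mulfI two0); rewrite mulr0.
  transitivity ((-1) * Y 1%N + 2 * Y m.+1 - Y 1%N); first ring.
  by rewrite E1 subrr.
have Hlow : forall s, (s.+2 <= m)%N -> Y s.+2 = Y 1%N.
  elim=> [|s IH] hs.
    have := HY 2%N; rewrite R2 // => /(_ ltac:(lia)); rewrite Hm1 => E2.
    have n3 : (3%:R : algC) != 0 by rewrite pnatr_eq0.
    apply/eqP; rewrite -subr_eq0; apply/eqP; apply: (mulfI n3); rewrite mulr0.
    transitivity (Y 2%N - ((- 2%:R) * Y 2%N + 1%:R * Y 1%N + 2 * Y 1%N)); first ring.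
    by rewrite E2 subrr.
  have := HY s.+3; rewrite R2 // => /(_ ltac:(lia)); rewrite Hm1 IH; last lia.
  move=> E2.
  have n3 : (s.+4%:R : algC) != 0 by rewrite pnatr_eq0.
  apply/eqP; rewrite -subr_eq0; apply/eqP; apply: (mulfI n3); rewrite mulr0.
  transitivity (Y s.+3 - ((- s.+3%:R) * Y s.+3 + s.+2%:R * Y 1%N + 2 * Y 1%N)); first ring.
  by rewrite E2 subrr.
have Hhigh : forall j, (1 <= j <= m - 2)%N -> Y (m + j)%N = Y 1%N.
  elim=> [|j IH] hj; first lia.
  have [->|j0] := eqVneq j 0%N; first by rewrite addn1.
  have := HY (m + j.+1 - 1)%N; rewrite R4; last lia.
  move=> /(_ ltac:(lia)).
  have -> : (m + j.+1 - 1)%N = (m + j)%N by lia.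
  rewrite IH; last lia.
  move=> E2.
  have n3 : (j.+2%:R : algC) != 0 by rewrite pnatr_eq0.
  apply/eqP; rewrite -subr_eq0; apply/eqP; apply: (mulfI n3); rewrite mulr0.
  transitivity ((- j.+1%:R) * Y 1%N + j.+2%:R * Y (m + j.+1)%N - Y 1%N); first ring.
  by rewrite E2 subrr.
move=> c hc.
have [->|c1] := eqVneq c 1%N; first by [].
have [hcm|hcm] := leqP c m.
  have -> : c = (c - 2).+2 by lia.
  by apply: Hlow; lia.
have -> : c = (m + (c - m))%N by lia.
by apply: Hhigh; lia.
Qed.

Local Notation M := ((m * (m + 1))%N%:R : algC).
Local Notation K := ((M * (harm m - 1))^-1).
Local Notation T := (\sum_(3 <= k < m.+1) ((k%:R : algC)^-1)).

Lemma harmT : harm m - 1 = 2^-1 + T.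
Proof.
rewrite /harm big_ltn; last lia.
rewrite big_ltn; last lia.
by rewrite invr1 addrAC subrr add0r.
Qed.

Lemma HT0 : 0 < 2^-1 + T.
Proof.
apply: (lt_le_trans (y := 2^-1)); first by rewrite invr_gt0 ltr0n.
rewrite lerDl; apply: sumr_ge0 => k _; rewrite invr_ge0 ler0n //.
Qed.

Lemma M0 : M != 0.
Proof. rewrite pnatr_eq0; apply/eqP; lia. Qed.

Lemma Vlow r : (r <= m)%N -> urnv_entry m r = K * r%:R.
Proof. by move=> h; rewrite /urnv_entry h. Qed.

Lemma Vhigh r : (m < r)%N -> urnv_entry m r = K * (M / (r - m + 2)%N%:R).
Proof. by move=> h; rewrite /urnv_entry leqNgt h. Qed.

Lemma Hv3 c : (1 <= c <= n)%N ->
  \sum_(1 <= r < n.+1) E r c * urnv_entry m r = urnv_entry m c.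
Proof.
move=> hc.
have HH0 : harm m - 1 != 0 by rewrite harmT gt_eqF // HT0.
have M0' := M0.
have [->|c1] := eqVneq c 1%N.
  by rewrite C1 !Vlow; try lia; ring.
have [hcm|hcm] := ltnP c m.
  have -> : c = (c - 2).+2 by lia.
  by rewrite C2 ?Vlow; try lia; ring.
have [->|cm] := eqVneq c m.
  rewrite C3 Vlow ?Vhigh //; try lia.
  have -> : (n - m + 2)%N = m by lia.
  have m0 : (m%:R : algC) != 0 by rewrite pnatr_eq0; apply/eqP; lia.
  by field; side.
have [->|cm1] := eqVneq c m.+1.
  rewrite C4 Vhigh //.
  rewrite (eq_big_nat _ _ (F2 := fun r => K * (2 * r%:R))); last first.
    by move=> r hr; rewrite Vlow; [ring | lia].
  rewrite -mulr_sumr -mulr_sumr sumnat.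
  have -> : (m.+1 - m + 2)%N = 3%N by lia.
  have n3 : (3%:R : algC) != 0 by rewrite pnatr_eq0.
  have n2 : (2%:R : algC) != 0 by rewrite pnatr_eq0.
  rewrite -addn1.
  by field; side.
have -> : c = (m + (c - m))%N by lia.
rewrite C5 ?Vhigh; try lia.
have -> : (m + (c - m) - 1 - m + 2)%N = (c - m).+1 by lia.
have -> : (m + (c - m) - m + 2)%N = (c - m).+2 by lia.
have n3 : ((c - m).+1%:R : algC) != 0 by rewrite pnatr_eq0.
have n2 : ((c - m).+2%:R : algC) != 0 by rewrite pnatr_eq0.
by field; side.
Qed.

Lemma Hs3 : \sum_(1 <= r < n.+1) urnv_entry m r = 1.
Proof.
have HH0 : harm m - 1 != 0 by rewrite harmT gt_eqF // HT0.
rewrite (big_cat_nat (n := m.+1)) /=; try lia.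
rewrite (eq_big_nat _ _ (F2 := fun r => K * r%:R)); last first.
  by move=> r hr; rewrite Vlow //; lia.
rewrite -mulr_sumr sumnat.
have -> : m.+1 = (3 + (m - 2))%N by lia.
rewrite big_addn.
have -> : ((2 * m - 2).+1 - (m - 2) = m.+1)%N by lia.
rewrite (eq_big_nat _ _ (F2 := fun k => K * M * (k%:R)^-1)); last first.
  move=> k hk; rewrite Vhigh; last lia.
  have -> : (k + (m - 2) - m + 2)%N = k by lia.
  by rewrite mulrA.
have -> : (3 + (m - 2))%N = m.+1 by lia.
rewrite -mulr_sumr.
have : harm m - 1 = 2^-1 + T := harmT.
move: HH0 => /[swap] ->.
have n2 : (2%:R : algC) != 0 by rewrite pnatr_eq0.
move=> HH0.
have T0 : 0 <= T by apply: sumr_ge0 => k _; rewrite invr_ge0 ler0n.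
have T1 : 1 + T * 2 != 0.
  rewrite gt_eqF //; apply: (lt_le_trans (y := 1)) => //.
  by rewrite lerDl mulr_ge0 // ler0n.
by field; rewrite T1 /=; side.
Qed.
End M3.

Lemma exists_max (T : finType) (f : T -> algC) (t0 : T) :
  (forall t, f t \is Num.real) -> exists i, forall j, f j <= f i.
Proof.
move=> Hr.
suff [i Hi] : exists i, forall j, j \in enum T -> f j <= f i.
  by exists i => j; apply: Hi; rewrite mem_enum.
elim: (enum T) => [|x s [i Hi]]; first by exists t0.
case/orP: (real_leVge (Hr x) (Hr i)) => H.
  exists i => j; rewrite inE => /orP [/eqP -> //|]; exact: Hi.
exists x => j; rewrite inE => /orP [/eqP -> //|js].
exact: le_trans (Hi _ js) H.
Qed.

Lemma gersh n (A : 'M[algC]_n)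
  (Hreal : forall i j, A i j \is Num.real)
  (Hoff : forall i j, i != j -> 0 <= A i j)
  (Hrow : forall i, \sum_j A i j = 1) lam :
  eigenvalue A^T lam -> lam != 1 -> 'Re lam < 1.
Proof.
move=> /eigenvalueP [u Hu Hu0] Hl1.
have Heq i : \sum_j u 0 j * A i j = lam * u 0 i.
  have := congr1 (fun M : 'rV_n => M 0 i) Hu; rewrite !mxE => <-.
  by apply: eq_bigr => j _; rewrite mxE.
have [i0 _] : exists i : 'I_n, true.
  case: n A u Hreal Hoff Hrow Hu Hu0 Heq => [|n] A u _ _ _ _ Hu0 _.
    by case/eqP: Hu0; apply/matrixP => a [].
  by exists ord0.
have [i Hi] := @exists_max _ (fun j => `|u 0 j|) i0 (fun t => normr_real _).
have ui0 : u 0 i != 0.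
  apply/negP => /eqP H; case/eqP: Hu0; apply/matrixP => a b.
  rewrite (ord1 a) mxE; apply/eqP; rewrite -normr_eq0 eq_le normr_ge0 andbT.
  by have := Hi b; rewrite /= H normr0.
set a := A i i.
have H1 : (lam - a) * u 0 i = \sum_(j | j != i) A i j * u 0 j.
  have := Heq i; rewrite (bigD1 i) //= => E.
  rewrite mulrBl -E [a * _]mulrC [u 0 i * a + _]addrC addrK.
  by apply: eq_bigr => j _; rewrite mulrC.
have Hs : \sum_(j | j != i) A i j = 1 - a.
  by have := Hrow i; rewrite (bigD1 i) //= => <-; rewrite addrAC subrr add0r.
have H2 : `|lam - a| * `|u 0 i| <= (1 - a) * `|u 0 i|.
  rewrite -normrM H1; apply: le_trans (ler_norm_sum _ _ _) _.
  rewrite -Hs mulr_suml; apply: ler_sum => j hj.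
  rewrite normrM (ger0_norm (Hoff _ _ _)) 1?eq_sym //.
  by apply: ler_wpM2l; [apply: Hoff; rewrite eq_sym|apply: Hi].
have H3 : `|lam - a| <= 1 - a.
  by rewrite ler_pM2r ?normr_gt0 in H2.
have Hre : 'Re (lam - a) = 'Re lam - a.
  by rewrite raddfB /= (Creal_ReP _ (Hreal i i)).
rewrite real_ltNge ?realn ?Creal_Re //; apply/negP => H.
set z := lam - a in H3 Hre.
have Hz1 : 1 - a <= 'Re z by rewrite Hre lerD2r.
have Hz2 : 'Re z <= `|'Re z| by apply: real_ler_norm; apply: Creal_Re.
have Hz3 : `|'Re z| <= `|z| by apply: (leif_normC_Re_Creal z).1.
have E1 : `|'Re z| = `|z|.
  apply/eqP; rewrite eq_le Hz3 /=.
  by apply: le_trans H3 (le_trans Hz1 Hz2).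
have zr : z \is Num.real by rewrite -(leif_normC_Re_Creal z).2 E1.
have Ez : z = 1 - a.
  apply/eqP; rewrite eq_le; apply/andP; split.
    exact: le_trans (real_ler_norm zr) H3.
  by have := Hz1; rewrite (Creal_ReP _ zr).
by case/eqP: Hl1; move: Ez; rewrite /z => /eqP; rewrite subr_eq subrK => /eqP.
Qed.

Lemma generic n (hn : (0 < n)%N) (A : 'M[algC]_n) (v : 'cV[algC]_n)
  (Hreal : forall i j, A i j \is Num.real)
  (Hoff : forall i j, i != j -> 0 <= A i j)
  (Hrow : forall i, \sum_j A i j = 1)
  (Hharm : forall x : 'cV[algC]_n, A *m x = x -> forall i j, x i 0 = x j 0)
  (Hv : A^T *m v = v) (Hs : \sum_i v i 0 = 1) :
  [/\ eigenvalue A^T 1 /\ (forall lambda : algC, eigenvalue A^T lambda ->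
              lambda != 1 -> 'Re lambda < 1),
      \rank (eigenspace A^T 1) = 1%N
    & forall w : 'cV[algC]_n, A^T *m w = w -> \sum_i w i 0 = 1 -> w = v].
Proof.
pose i0 := Ordinal hn.
pose r1 := const_mx 1 : 'rV[algC]_n.
have Hr1 : r1 *m A^T = r1.
  apply/matrixP => a b; rewrite !mxE -(Hrow b).
  by apply: eq_bigr => j _; rewrite !mxE mul1r.
have r1n0 : r1 != 0.
  by apply/negP => /eqP/matrixP/(_ 0 i0); rewrite !mxE => /eqP; rewrite oner_eq0.
have HK : (eigenspace A^T 1 == r1)%MS.
  apply/andP; split; last first.
    by apply/sub_kermxP; rewrite mulmxBr Hr1 mul_mx_scalar scale1r subrr.
  apply/row_subP => k; set u := row k _.
  have Hu : u *m A^T = u.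
    have := mulmx_ker (A^T - 1%:M) => /(congr1 (row k)).
    rewrite row_mul row0 -/u mulmxBr mul_mx_scalar scale1r => /eqP.
    by rewrite subr_eq0 => /eqP.
  have Hx : A *m u^T = u^T by rewrite -[A]trmxK -trmx_mul Hu.
  apply/sub_rVP; exists (u 0 i0); apply/matrixP => a b.
  rewrite (ord1 a) !mxE mulr1.
  by have := Hharm _ Hx b i0; rewrite !mxE.
have rK : \rank (eigenspace A^T 1) = 1%N by rewrite (eqmx_rank HK) rank_rV r1n0.
split => //.
  split; last exact: gersh.
  by rewrite /eigenvalue -mxrank_eq0 rK.
move=> w Hw Hws.
pose L := kermx (A - 1%:M).
have rL : \rank L = 1%N.
  rewrite mxrank_ker -mxrank_tr linearB /= tr_scalar_mx.
  by rewrite -mxrank_ker.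
have sub_tr (y : 'cV[algC]_n) : A^T *m y = y -> (y^T <= L)%MS.
  move=> Hy; apply/sub_kermxP.
  by rewrite mulmxBr mul_mx_scalar scale1r -{1}[A]trmxK -trmx_mul Hy subrr.
have vn0 : v^T != 0.
  apply/negP => /eqP H; move: Hs; rewrite big1 => [/eqP|i _].
    by rewrite eq_sym oner_eq0.
  by have := congr1 (fun M : 'rV_n => M 0 i) H; rewrite !mxE.
have HvL : (v^T == L)%MS.
  by rewrite -(mxrank_leqif_eq (sub_tr _ Hv)).2 rank_rV vn0 rL.
case/andP: HvL => _ HLv.
have /sub_rVP [c Hc] := submx_trans (sub_tr _ Hw) HLv.
have c1 : c = 1.
  rewrite -Hws -[c]mulr1 -Hs mulr_sumr; apply: eq_bigr => i _.
  by have := congr1 (fun M : 'rV_n => M 0 i) Hc; rewrite !mxE => ->.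
by apply: trmx_inj; rewrite Hc c1 scale1r.
Qed.

Lemma entry_prop m r c : urnA_entry m r c \is Num.real /\ (r != c -> 0 <= urnA_entry m r c).
Proof.
rewrite /urnA_entry; repeat (case: ifPn => ?); rewrite ?realN ?realn ?ler0n ?rpred0 ?rpred1 ?rpredN ?(realn _ 2) //;
  split => // /eqP ?; exfalso; lia.
Qed.

Lemma sum_shift n (F : nat -> algC) : \sum_(j < n) F j.+1 = \sum_(1 <= c < n.+1) F c.
Proof. by rewrite big_add1 /= big_mkord. Qed.

Lemma bridge m (hm : (2 <= m)%N) :
  (forall r, (1 <= r <= 2 * m - 2)%N ->
     \sum_(1 <= c < (2 * m - 2).+1) urnA_entry m r c * 1 = 1) ->
  (forall Y : nat -> algC, (forall r, (1 <= r <= 2 * m - 2)%N ->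
     \sum_(1 <= c < (2 * m - 2).+1) urnA_entry m r c * Y c = Y r) ->
     forall c, (1 <= c <= 2 * m - 2)%N -> Y c = Y 1%N) ->
  (forall c, (1 <= c <= 2 * m - 2)%N ->
     \sum_(1 <= r < (2 * m - 2).+1) urnA_entry m r c * urnv_entry m r = urnv_entry m c) ->
  \sum_(1 <= r < (2 * m - 2).+1) urnv_entry m r = 1 ->
  [/\ (urnA m)^T *m urnv m = urnv m,
      \sum_i urnv m i 0 = 1,
      eigenvalue (urnA m)^T 1
        /\ (forall lambda : algC, eigenvalue (urnA m)^T lambda ->
              lambda != 1 -> 'Re lambda < 1),
      \rank (eigenspace (urnA m)^T 1) = 1%N
    & forall w : 'cV[algC]_(2 * m - 2),
        (urnA m)^T *m w = w -> \sum_i w i 0 = 1 -> w = urnv m].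
Proof.
move=> Hrow Hharm Hv Hs.
have hn : (0 < 2 * m - 2)%N by lia.
have HA i j : urnA m i j = urnA_entry m i.+1 j.+1 by rewrite mxE.
have Hv' : (urnA m)^T *m urnv m = urnv m.
  apply/matrixP => i a; rewrite (ord1 a) !mxE.
  rewrite -(Hv i.+1); last by have := ltn_ord i; lia.
  rewrite -(sum_shift _ (fun r => urnA_entry m r i.+1 * urnv_entry m r)).
  by apply: eq_bigr => j _; rewrite !mxE.
have Hs' : \sum_i urnv m i 0 = 1.
  rewrite -Hs -(sum_shift _ (urnv_entry m)).
  by apply: eq_bigr => j _; rewrite !mxE.
have Hreal i j : urnA m i j \is Num.real.
  by rewrite HA; exact: (proj1 (entry_prop m i.+1 j.+1)).
have Hoff (i j : 'I_(2 * m - 2)) : i != j -> 0 <= urnA m i j.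
  by move=> h; rewrite HA; apply: (proj2 (entry_prop m i.+1 j.+1)).
have Hrow' i : \sum_j urnA m i j = 1.
  rewrite -(Hrow i.+1); last by have := ltn_ord i; lia.
  rewrite -(sum_shift _ (fun c => urnA_entry m i.+1 c * 1)).
  by apply: eq_bigr => j _; rewrite HA mulr1.
have Hharm' (x : 'cV_(2 * m - 2)) : urnA m *m x = x -> forall i j, x i 0 = x j 0.
  move=> Hx.
  pose Y c := odflt 0 (omap (fun j : 'I_(2 * m - 2) => x j 0) (insub c.-1)).
  have HY (j : 'I_(2 * m - 2)) : Y j.+1 = x j 0 by rewrite /Y /= valK.
  have HY1 : forall c, (1 <= c <= 2 * m - 2)%N -> Y c = Y 1%N.
    apply: Hharm => r hr.
    have hr' : (r.-1 < 2 * m - 2)%N by lia.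
    have := congr1 (fun M : 'cV_(2 * m - 2) => M (Ordinal hr') 0) Hx.
    rewrite !mxE /= -HY /= prednK; last lia.
    move=> <-; rewrite -(sum_shift _ (fun c => urnA_entry m r c * Y c)).
    apply: eq_bigr => j _; rewrite HA HY /= prednK //; lia.
  move=> i j; rewrite -!HY !HY1 //; [have := ltn_ord j | have := ltn_ord i]; lia.
have [G1 G2 G3] := @generic _ hn (urnA m) (urnv m) Hreal Hoff Hrow' Hharm' Hv' Hs'.
by split.
Qed.

Ltac exp3 := rewrite big_ltn; last by []; rewrite big_ltn; last by []; rewrite big_geq; last by [].

Lemma harm2 : harm 2 = 1 + 2^-1.
Proof.
rewrite /harm big_ltn; last by [].
rewrite big_ltn; last by [].
rewrite big_geq; last by [].
by rewrite addr0 invr1.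
Qed.

Theorem lemma1 (m : nat) (hm : (2 <= m)%N) :
  [/\ (urnA m)^T *m urnv m = urnv m,
      \sum_i urnv m i 0 = 1,
      eigenvalue (urnA m)^T 1
        /\ (forall lambda : algC, eigenvalue (urnA m)^T lambda ->
              lambda != 1 -> 'Re lambda < 1),
      \rank (eigenspace (urnA m)^T 1) = 1%N
    & forall w : 'cV[algC]_(2 * m - 2),
        (urnA m)^T *m w = w -> \sum_i w i 0 = 1 -> w = urnv m].
Proof.
have [m3|m2] := ltnP 2 m.
  apply: bridge => //.
  - exact: Hrow3.
  - exact: Hharm3.
  - exact: Hv3.
  - exact: Hs3.
have {m2 hm} -> : m = 2%N by lia.
apply: bridge; first by [].
- move=> r hr; have [->|->] : r = 1%N \/ r = 2%N by lia.
  + exp3; rewrite /urnA_entry /=; ring.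
  + exp3; rewrite /urnA_entry /=; ring.
- move=> Y HY c hc.
  have := HY 1%N ltac:(lia); exp3; rewrite /urnA_entry /= => E1.
  have two0 : (2 : algC) != 0 by rewrite pnatr_eq0.
  have E2 : Y 2%N = Y 1%N.
    apply/eqP; rewrite -subr_eq0; apply/eqP; apply: (mulfI two0); rewrite mulr0.
    transitivity ((-1) * Y 1%N + (2 * Y 2%N + 0) - Y 1%N); first ring.
    by rewrite E1 subrr.
  by have [->|->] : c = 1%N \/ c = 2%N by lia.
- move=> c hc; have [->|->] : c = 1%N \/ c = 2%N by lia.
  + exp3; rewrite /urnA_entry /urnv_entry /=; ring.
  + exp3; rewrite /urnA_entry /urnv_entry /=; ring.
- exp3; rewrite /urnv_entry /= harm2.
  have n2 : (2 : algC) != 0 by rewrite pnatr_eq0.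
  by field.
Qed.
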